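(* In the setting of the context, let $i\in\{1,\dots,n\}$ and let $(x,y)\in\mathbb{Z}^2$ with $\gcd(x,y)=1$, $(x,y)\notin\mathbf{A}$, $0<y\le Y_S$, $|F(x,y)|\le h$ and $|L_i(x,y)|>\frac{1}{2y}$. Then $$|m(x,y)-\beta_i(x,y)|\le \frac72+2h^{1/n}Y_S.$$
   Context: Setting: $n\ge3$; $F(x,y)=\sum_{i=0}^s a_ix^{n_i}y^{n-n_i}\in\mathbb{Z}[x,y]$ of degree $n$, irreducible over $\mathbb{Q}$, all $a_i\neq0$, $0=n_0<\dots<n_s=n$, discriminant $D$. $R=n^{800\log^2n}$; $h$ a positive integer and $\kappa>1$ an integer with $h\le |D|^{\frac{1}{2(n-1)(2+1/\kappa)}}/\big((3R)^{n/2}(ns)^{2s+n}\big)$; $Y_S=e^6s(ns)^{2s/n}h^{1/(\kappa n)}$. Write $F(x,y)=a\prod_{i=1}^n(x-\alpha_iy)$ ($\alpha_i$ the roots of $F(x,1)$) and $L_i(x,y)=x-\alpha_iy$. A ''solution'' is a pair $(x,y)\in\mathbb{Z}^2$ with $\gcd(x,y)=1$ and $1\le|F(x,y)|\le h$, with $(x,y)$ and $(-x,-y)$ identified. Assume there is a solution with $0\le y\le Y_S$, and fix one such, $(x_0,y_0)$, with $y_0\ge0$ minimal. Index the roots so that $|L_1(x_0,y_0)|=\min_i|L_i(x_0,y_0)|$. There is at most one solution $(x^*,y^* )$ with $0<y^*\le Y_S$ and $|L_1(x^*,y^* )|<1/(2Y_S)$; let $\mathbf{A}=\{(x_0,y_0)\}$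 together with $(x^*,y^* )$ if it exists. For a primitive $(x,y)$ choose integers $x',y'$ with $x'y-xy'=1$ and set $\beta_j(x,y)=-L_j(x',y')/L_j(x,y)$ for $j=1,\dots,n$ (so that $F(ux+wx',uy+wy')=F(x,y)\prod_j(u-\beta_j(x,y)w)$), and let $m(x,y)$ be an integer with $|\mathrm{Re}\,\beta_1(x,y)-m(x,y)|\le 1/2$. *)

(* Defs.v *)
From mathcomp Require Import all_boot all_order all_algebra.
From mathcomp Require Import all_classical all_reals all_analysis.
From mathcomp.real_closed Require Import complex.
Set Implicit Arguments. Unset Strict Implicit. Unset Printing Implicit Defensive.
Import Order.TTheory GRing.Theory Num.Theory.
Local Open Scope ring_scope.

Notation normc := ComplexField.Normc.normc.

Definition Fform (s n : nat) (a : 'I_s.+1 -> int) (e : 'I_s.+1 -> nat) (x y : int) : int :=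
  \sum_(i < s.+1) a i * x ^+ e i * y ^+ (n - e i).

Definition Fpoly1 (s : nat) (a : 'I_s.+1 -> int) (e : 'I_s.+1 -> nat) : {poly int} :=
  \sum_(i < s.+1) (a i)%:P * 'X^(e i).

Definition Lf (R : rcfType) (n : nat) (alpha : 'I_n -> R[i]) (j : 'I_n) (x y : int) : R[i] :=
  x%:~R - alpha j * y%:~R.

Definition betaf (R : rcfType) (n : nat) (alpha : 'I_n -> R[i]) (j : 'I_n) (x y x' y' : int) : R[i] :=
  - Lf alpha j x' y' / Lf alpha j x y.

(* discriminant of the binary form a * prod (x - alpha_j y) *)
Definition discF (R : rcfType) (n : nat) (lead : R[i]) (alpha : 'I_n -> R[i]) : R[i] :=
  lead ^+ (2 * n - 2) * \prod_(j < n) \prod_(k < n | (j < k)%N) (alpha j - alpha k) ^+ 2.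

Definition Rconst (R : realType) (n : nat) : R := (n%:R) `^ (800 * (ln (n%:R)) ^+ 2).

Definition YS (R : realType) (n s h kappa : nat) : R :=
  expR 6 * s%:R * ((n * s)%:R `^ ((2 * s)%:R / n%:R)) * (h%:R `^ (1 / (kappa * n)%:R)).

Definition is_sol (s n : nat) (a : 'I_s.+1 -> int) (e : 'I_s.+1 -> nat) (h : nat) (x y : int) : Prop :=
  gcdz x y = 1 /\ 1 <= `|Fform n a e x y| /\ `|Fform n a e x y| <= h%:Z.

(* membership in the set A = {(x0,y0)} U {(xs,ys)}, up to (x,y) ~ (-x,-y);
   (xs,ys) is the (at most one) solution with 0 < ys <= Y_S and |L_1(xs,ys)| < 1/(2 Y_S) *)
Definition inA (R : realType) (s n : nat) (a : 'I_s.+1 -> int) (e : 'I_s.+1 -> nat)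
  (h kappa : nat) (alpha : 'I_n -> R[i]) (i1 : 'I_n) (x0 y0 x y : int) : Prop :=
  (x = x0 /\ y = y0) \/ (x = - x0 /\ y = - y0) \/
  (exists2 sg : int, (sg = 1 \/ sg = -1) &
     is_sol n a e h (sg * x) (sg * y) /\ 0 < sg * y /\
     ((sg * y)%:~R <= YS R n s h kappa :> R) /\
     normc (Lf alpha i1 (sg * x) (sg * y)) < 1 / (2 * YS R n s h kappa)).

(* Main.v *)
Require Import Defs.
From mathcomp Require Import all_boot all_order all_algebra.
From mathcomp Require Import all_classical all_reals all_analysis.
From mathcomp.real_closed Require Import complex.
From mathcomp Require Import ring lra.
Import Order.TTheory GRing.Theory Num.Theory.
Local Open Scope ring_scope.

Lemma normc_real (R : rcfType) (r : R) : normc (r%:C)%C = `|r|.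
Proof. by rewrite /= expr0n /= addr0 sqrtr_sqr. Qed.

Lemma Re_le_normc (R : rcfType) (z : R[i]) : `|complex.Re z| <= normc z.
Proof.
case: z => u v /=; rewrite -sqrtr_sqr; apply: ler_wsqrtr.
by rewrite lerDl sqr_ge0.
Qed.

Lemma Re_sub (R : rcfType) (r : R) (z : R[i]) : complex.Re (- (r%:C)%C - z) = - r - complex.Re z.
Proof. by case: z. Qed.

Lemma beta_eq (R : rcfType) n (alpha : 'I_n -> R[i]) j (x y x' y' : int) :
  x' * y - x * y' = 1 -> y != 0 -> Lf alpha j x y != 0 ->
  betaf alpha j x y x' y' = - (y'%:~R / y%:~R) - (y%:~R * Lf alpha j x y)^-1.
Proof.
move=> H hy hL.
have H' : (x'%:~R * y%:~R - x%:~R * y'%:~R : R[i]) = 1.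
  by have := congr1 (intr : int -> R[i]) H; rewrite rmorphB !rmorphM /= rmorph1.
have hyC : (y%:~R : R[i]) != 0 by rewrite intr_eq0.
rewrite /betaf /Lf in hL *.
apply/eqP; rewrite -subr_eq0; apply/eqP.
transitivity ((1 - (x'%:~R * y%:~R - x%:~R * y'%:~R)) / (y%:~R * (x%:~R - alpha j * y%:~R)) : R[i]).
  by field; rewrite hyC hL.
by rewrite H' subrr mul0r.
Qed.

Theorem lemma4p4 (R : realType) (n s : nat) (a : 'I_s.+1 -> int) (e : 'I_s.+1 -> nat)
  (Hn : (3 <= n)%N)
  (He_incr : forall i j : 'I_s.+1, (i < j)%N -> (e i < e j)%N)
  (He0 : e ord0 = 0%N) (Hes : e ord_max = n)
  (Ha : forall i, a i != 0)
  (Hirr : irreducible_poly (map_poly (intr : int -> rat) (Fpoly1 a e)))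
  (alpha : 'I_n -> R[i])
  (Hroots : map_poly (intr : int -> R[i]) (Fpoly1 a e)
            = (a ord_max)%:~R *: \prod_(j < n) ('X - (alpha j)%:P))
  (h kappa : nat) (Hh : (0 < h)%N) (Hkappa : (1 < kappa)%N)
  (HhD : (h%:R : R) <=
     normc (discF (a ord_max)%:~R alpha) `^ (1 / (2 * (n - 1)%:R * (2 + 1 / kappa%:R)))
     / ((3 * Rconst R n) `^ (n%:R / 2) * (n * s)%:R ^+ (2 * s + n)))
  (x0 y0 : int)
  (Hsol0 : is_sol n a e h x0 y0) (Hy0 : 0 <= y0) (Hy0Y : (y0%:~R : R) <= YS R n s h kappa)
  (Hy0min : forall x y : int, is_sol n a e h x y -> 0 <= y ->
              (y%:~R : R) <= YS R n s h kappa -> y0 <= y)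
  (i1 : 'I_n)
  (Hi1 : forall j : 'I_n, normc (Lf alpha i1 x0 y0) <= normc (Lf alpha j x0 y0))
  (i : 'I_n) (x y : int)
  (Hgcd : gcdz x y = 1)
  (HnotA : ~ inA a e h kappa alpha i1 x0 y0 x y)
  (Hy : 0 < y) (HyY : (y%:~R : R) <= YS R n s h kappa)
  (HF : `|Fform n a e x y| <= h%:Z)
  (HLi : normc (Lf alpha i x y) > 1 / (2 * y%:~R))
  (x' y' : int) (Hxy' : x' * y - x * y' = 1)
  (m : int) (Hm : `|complex.Re (betaf alpha i1 x y x' y') - m%:~R| <= 1 / 2 :> R) :
  normc (m%:~R - betaf alpha i x y x' y')
    <= 7 / 2 + 2 * (h%:R `^ (1 / n%:R)) * YS R n s h kappa.
Proof.
set Y := YS R n s h kappa.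
set yR : R := y%:~R.
have Hy1 : 1 <= yR by rewrite /yR ler1z -gtz0_ge1.
have HY1 : 1 <= Y by apply: le_trans HyY.
have HY0 : 0 < Y by apply: lt_le_trans HY1; exact: ltr01.
have hy0 : y != 0 by rewrite gt_eqF.
have Hek : forall k : 'I_s.+1, (e k <= n)%N.
  move=> k; rewrite -Hes; have : (k <= s)%N by rewrite -ltnS.
  rewrite leq_eqVlt => /orP [/eqP hk | hk].
    by have -> : k = ord_max by apply: val_inj.
  exact: ltnW (He_incr _ ord_max hk).
have HF0 : Fform n a e x y != 0.
  apply/negP => /eqP HF0.
  set p := map_poly (intr : int -> rat) (Fpoly1 a e).
  have Hsz : size p = n.+1.
    have H1 : size (map_poly (intr : int -> R[i]) (Fpoly1 a e)) = n.+1.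
      rewrite Hroots size_scale ?intr_eq0 ?Ha // size_prod_XsubC.
      by rewrite /index_enum unlock /= -enumT size_enum_ord.
    by rewrite /p !size_map_inj_poly in H1 * => //; apply: intr_inj.
  have hyQ : (y%:~R : rat) != 0 by rewrite intr_eq0.
  have Hr : root p (x%:~R / y%:~R).
    have Heq : (y%:~R : rat) ^+ n * p.[x%:~R / y%:~R] = (Fform n a e x y)%:~R.
      rewrite /p /Fpoly1 /Fform rmorph_sum horner_sum big_distrr rmorph_sum /=.
      apply: eq_bigr => k _.
      rewrite rmorphM /= map_polyC map_polyXn hornerCM hornerXn.
      rewrite !rmorphM !rmorphXn /= -{1}(subnKC (Hek k)) exprD expr_div_n.
      by field; rewrite expf_neq0.
    move: Heq; rewrite HF0 /root => /eqP; rewrite mulf_eq0 expf_eq0 (negbTE hyQ) andbF /=.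
    by move=> /eqP ->.
  move: Hr; rewrite root_factor_theorem => Hdv.
  have := Hirr.2 _ _ Hdv; rewrite size_XsubC => /(_ isT) /eqp_size.
  rewrite size_XsubC -/p Hsz => -[] Hn2.
  by move: Hn; rewrite -Hn2.
have HL1 : 1 / (2 * Y) <= normc (Lf alpha i1 x y).
  rewrite leNgt; apply/negP => Hlt; apply: HnotA; right; right.
  exists 1; first by left.
  rewrite !mul1r; split; last first.
    split; first exact: Hy.
    split; first exact: HyY.
    by move: Hlt; rewrite mul1r.
  split; first exact: Hgcd.
  split; last exact: HF.
  by rewrite -gtz0_ge1 normr_gt0.
have hL1 : Lf alpha i1 x y != 0.
  apply/eqP => H0; move: HL1; rewrite H0 ComplexField.Normc.normc0.
  by rewrite leNgt divr_gt0 // mulr_gt0.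
have hyR0 : 0 < yR by apply: lt_le_trans Hy1; exact: ltr01.
have hLi : Lf alpha i x y != 0.
  apply/eqP => H0; move: HLi; rewrite H0 ComplexField.Normc.normc0.
  by rewrite ltNge ltW // divr_gt0 // mulr_gt0.
rewrite (@beta_eq _ _ alpha i x y x' y' Hxy' hy0 hLi).
rewrite (@beta_eq _ _ alpha i1 x y x' y' Hxy' hy0 hL1) in Hm.
set q := (y'%:~R / y%:~R : R[i]) in Hm *.
set qr := (y'%:~R / y%:~R : R).
have Hq : q = (qr%:C)%C by rewrite /q /qr rmorphM fmorphV /= !rmorph_int.
set w := ((y%:~R : R[i]) * Lf alpha i1 x y)^-1 in Hm *.
set wi := ((y%:~R : R[i]) * Lf alpha i x y)^-1.
set mR := (m%:~R : R) in Hm *.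
rewrite Hq Re_sub in Hm.
have Hyc : normc (y%:~R : R[i]) = yR.
  by rewrite -(rmorph_int (real_complex R)) normc_real ger0_norm // ltW.
have -> : (m%:~R - (- q - wi) : R[i]) = ((mR - (- qr - complex.Re w))%:C)%C - ((complex.Re w)%:C)%C + wi.
  by rewrite Hq !rmorphB !rmorphN /= /mR rmorph_int; ring.
set nL1 := normc (Lf alpha i1 x y) in HL1 *.
set nLi := normc (Lf alpha i x y) in HLi *.
have B1 : normc (((mR - (- qr - complex.Re w))%:C)%C) <= 1/2.
  by rewrite normc_real distrC.
have nL1p : 0 < nL1 by apply: lt_le_trans HL1; rewrite divr_gt0 // mulr_gt0.
have nLip : 0 < nLi by apply: le_lt_trans HLi; rewrite divr_ge0 // mulr_ge0 // ltW.
have B2 : normc (((complex.Re w)%:C)%C) <= 2 * Y.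
  rewrite normc_real; apply: le_trans (@Re_le_normc R w) _.
  rewrite /w ComplexField.Normc.normcV ComplexField.Normc.normcM Hyc -/nL1.
  have h2Y : 0 < 2 * Y by rewrite mulr_gt0.
  have hyl : 0 < yR * nL1 by rewrite mulr_gt0.
  rewrite -[2 * Y]invrK lef_pV2 ?posrE ?invr_gt0 //.
  apply: le_trans (_ : nL1 <= _); first by rewrite -div1r.
  by rewrite ler_peMl // ltW.
have B3 : normc wi <= 2.
  rewrite /wi ComplexField.Normc.normcV ComplexField.Normc.normcM Hyc -/nLi.
  rewrite -[X in _ <= X]invrK lef_pV2 ?posrE ?invr_gt0 ?mulr_gt0 //.
  have -> : (2:R)^-1 = yR * (1 / (2 * yR)) by field; rewrite gt_eqF.
  by rewrite ler_pM2l // ltW.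
have HP : 1 <= (h%:R : R) `^ (1 / n%:R).
  have := @ler_powR R (h%:R) _ 0 (1 / n%:R); rewrite powRr0; apply.
    by rewrite ler1n.
  by rewrite divr_ge0.
apply: le_trans (@le_normcD R _ _) _.
apply: le_trans (lerD (@le_normcD R _ _) (lexx _)) _.
rewrite normcN.
have HPY : 0 <= ((h%:R : R) `^ (1 / n%:R) - 1) * Y.
  by rewrite mulr_ge0 // ?subr_ge0 // ltW.
lra.
Qed.
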